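(* Every star-like hereditary family is finitely generated; that is, if $\mathcal{F}$ is a star-like hereditary family then there is a finite set of graphs $\mathcal{H}$ with $\mathcal{F}=\operatorname{Forb}(\mathcal{H})$.
   Context: Graphs are finite and simple. A family is hereditary if closed under isomorphism and induced subgraphs. $\operatorname{Forb}(\mathcal{H})$ is the family of graphs with no induced subgraph isomorphic to a member of $\mathcal{H}$. A set $X\subseteq V(G)$ is a crown of $G$ if every $v\in V(G)$ is adjacent either to all vertices of $X\setminus\{v\}$ or to none of them; $S\subseteq V(G)$ is a core if $V(G)\setminus S$ is a crown; $G$ is an $s$-star if it has a core of size at most $s$. A hereditary family is $s$-star-like if there exists $n_0$ such that every graph in it with at least $n_0$ vertices is an $s$-star, and star-like if it is $s$-star-like for some integer $s\ge0$. *)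

(* Defs.v *)
From mathcomp Require Import all_boot.
From Stdlib Require Lists.List.
Set Implicit Arguments. Unset Strict Implicit. Unset Printing Implicit Defensive.

Record graph := Graph {
  gn : nat;
  gadj : rel 'I_gn;
  gsym : symmetric gadj;
  girr : irreflexive gadj }.

Definition induced_in (H G : graph) : Prop :=
  exists f : 'I_(gn H) -> 'I_(gn G),
    injective f /\ forall i j, gadj i j = gadj (f i) (f j).

Definition isomorphic (G H : graph) : Prop :=
  exists f : 'I_(gn G) -> 'I_(gn H),
    bijective f /\ forall i j, gadj i j = gadj (f i) (f j).

Definition gfamily := graph -> Prop.

Definition hereditary (F : gfamily) : Prop :=
  (forall G H, isomorphic G H -> F G -> F H) /\
  (forall G H, induced_in H G -> F G -> F H).

Definition Forb (Hs : graph -> Prop) : gfamily :=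
  fun G => forall H, Hs H -> ~ induced_in H G.

Definition crown (G : graph) (X : {set 'I_(gn G)}) : Prop :=
  forall v : 'I_(gn G),
    (forall x, x \in X -> x != v -> gadj v x) \/
    (forall x, x \in X -> x != v -> ~~ gadj v x).

Definition gcore (G : graph) (S : {set 'I_(gn G)}) : Prop := crown (~: S).

Definition s_star (s : nat) (G : graph) : Prop :=
  exists S : {set 'I_(gn G)}, gcore S /\ #|S| <= s.

Definition s_star_like (s : nat) (F : gfamily) : Prop :=
  exists n0, forall G, F G -> n0 <= gn G -> s_star s G.

Definition star_like (F : gfamily) : Prop := exists s, s_star_like s F.

Definition finitely_generated (F : gfamily) : Prop :=
  exists Hs : seq graph, forall G, F G <-> Forb (fun H => Stdlib.Lists.List.In H Hs) G.

(* Main.v *)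
Require Import Defs.
From mathcomp Require Import all_boot.
From mathcomp Require Import zify.
From Stdlib Require Import Classical.
Set Implicit Arguments. Unset Strict Implicit. Unset Printing Implicit Defensive.

Lemma induced_trans A B C : induced_in A B -> induced_in B C -> induced_in A C.
Proof.
move=> [f [fi fa]] [g [gi ga]]; exists (g \o f); split; first exact: inj_comp.
by move=> i j /=; rewrite fa ga.
Qed.

Lemma induced_refl G : induced_in G G.
Proof. exists id; split=> //; exact: inj_id. Qed.

Definition minnm (F : gfamily) (M : graph) :=
  ~ F M /\ forall H, induced_in H M -> gn H < gn M -> F H.

Lemma exists_minimal F G : ~ F G -> exists M, minnm F M /\ induced_in M G.
Proof.
have: gn G <= gn G by [].
move: {2}(gn G) => n; elim: n G => [|n IH] G hn nG.
  exists G; split; last exact: induced_refl.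
  by split=> // H _ hH; lia.
case: (classic (exists H, induced_in H G /\ gn H < gn G /\ ~ F H)).
  move=> [H [HG [hH nH]]].
  have [|M [mM MH]] := IH H _ nH; first by lia.
  by exists M; split=> //; apply: induced_trans MH HG.
move=> nex; exists G; split; last exact: induced_refl.
split=> // H HG hH; apply: NNPP => nH; apply: nex; by exists H.
Qed.

Lemma isub_sym (G : graph) (A : {set 'I_(gn G)}) :
  symmetric (fun i j : 'I_#|A| => gadj (enum_val i) (enum_val j)).
Proof. by move=> i j; apply: gsym. Qed.
Lemma isub_irr (G : graph) (A : {set 'I_(gn G)}) :
  irreflexive (fun i j : 'I_#|A| => gadj (enum_val i) (enum_val j)).
Proof. by move=> i; apply: girr. Qed.

Definition isub (G : graph) (A : {set 'I_(gn G)}) : graph :=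
  @Graph #|A| _ (@isub_sym G A) (@isub_irr G A).

Lemma isub_induced (G : graph) (A : {set 'I_(gn G)}) : induced_in (isub A) G.
Proof. exists enum_val; split=> //; exact: enum_val_inj. Qed.

Lemma crown_pair (G : graph) (X : {set 'I_(gn G)}) x y z :
  crown X -> y \in X -> z \in X -> y != x -> z != x -> gadj x y = gadj x z.
Proof.
move=> /(_ x) [h|h] hy hz ny nz.
  by rewrite !h.
by rewrite (negbTE (h _ hy ny)) (negbTE (h _ hz nz)).
Qed.

Lemma crown_const (G : graph) (X : {set 'I_(gn G)}) x y x' y' :
  crown X -> x \in X -> y \in X -> x' \in X -> y' \in X ->
  x != y -> x' != y' -> gadj x y = gadj x' y'.
Proof.
move=> cX hx hy hx' hy' nxy nxy'.
case: (eqVneq x x') => [exx|nx].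
  subst x'; by apply: (crown_pair cX hy hy'); rewrite eq_sym.
rewrite (crown_pair cX hy hx'); try by rewrite eq_sym.
rewrite gsym; apply: (crown_pair cX hx hy'); by rewrite // eq_sym.
Qed.

Lemma one_out (F : gfamily) s n0 (M : graph) (z : 'I_(gn M)) :
  (forall G, F G -> n0 <= gn G -> s_star s G) -> minnm F M -> n0 < gn M ->
  exists X : {set 'I_(gn M)},
    (forall u, u != z ->
       (forall x, x \in X -> x != u -> gadj u x) \/
       (forall x, x \in X -> x != u -> ~~ gadj u x)) /\ #|~: X| <= s.+1.
Proof.
move=> hs [nM mM] hn.
set A := [set~ z].
have cA : #|A| = (gn M).-1 by rewrite cardsC1 card_ord.
have FH : F (isub A).
  apply: mM; first exact: isub_induced.
  rewrite /= cA; lia.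
have [S' [cS' hS']] := hs _ FH ltac:(rewrite /= cA; lia).
exists [set enum_val i | i in ~: S']; split.
  move=> u uz.
  have uA : u \in A by rewrite in_setC1.
  have ei := enum_rankK_in uA uA.
  set i := enum_rank_in uA u in ei.
  case: (cS' i) => h; [left|right]; move=> y /imsetP [j jS ->] yu;
    have ji : j != i by apply: contraNneq yu => ->; rewrite ei.
    by have := h j jS ji; rewrite /= ei.
  by have := h j jS ji; rewrite /= ei.
have := cardsC [set enum_val i | i in ~: S'].
rewrite card_imset; last exact: enum_val_inj.
have := cardsC S'.
rewrite !card_ord /=.
move=> h2 h3.
have e : #|S'| + #|~: S'| = (gn M).-1 by rewrite h2 -cA.
move: e h3 hS'; set a := #|S'|; set b := #|~: S'|.
set c := #|~: [set enum_val i | i in ~: S']|; lia.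
Qed.

Lemma core_exists (F : gfamily) s n0 (M : graph) :
  (forall G, F G -> n0 <= gn G -> s_star s G) -> minnm F M -> n0 + 2 <= gn M ->
  exists S : {set 'I_(gn M)}, crown (~: S) /\ #|S| <= s + s + 2.
Proof.
move=> hs mM hn.
have h1 : 0 < gn M by lia.
have h2 : 1 < gn M by lia.
have [Xv [cv sv]] := one_out (Ordinal h1) hs mM ltac:(lia).
have [Xw [cw sw]] := one_out (Ordinal h2) hs mM ltac:(lia).
exists (~: (Xv :&: Xw)); split.
  rewrite setCK => u.
  case: (eqVneq u (Ordinal h1)) => [->|uv].
    have : Ordinal h1 != Ordinal h2 by [].
    move=> /cw [h|h]; [left|right]; move=> x /setIP [_ xw]; exact: h.
  case: (cv u uv) => h; [left|right]; move=> x /setIP [xv _]; exact: h.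
rewrite setCI cardsU; lia.
Qed.

Definition sq (G : graph) (S : {set 'I_(gn G)}) : seq 'I_(gn G) :=
  enum S ++ enum (~: S).

Definition adjn (G : graph) (s : seq 'I_(gn G)) (i j : nat) : bool :=
  [exists u, exists v, (index u s == i) && (index v s == j) && gadj u v].

Lemma sq_uniq (G : graph) (S : {set 'I_(gn G)}) : uniq (sq S).
Proof.
rewrite /sq cat_uniq !enum_uniq /= andbT.
apply/hasPn => x; rewrite !mem_enum in_setC; by case: (x \in S).
Qed.

Lemma sq_mem (G : graph) (S : {set 'I_(gn G)}) u : u \in sq S.
Proof. rewrite /sq mem_cat !mem_enum in_setC; by case: (u \in S). Qed.

Lemma sq_size (G : graph) (S : {set 'I_(gn G)}) : size (sq S) = gn G.
Proof. by rewrite /sq size_cat -!cardE cardsC card_ord. Qed.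

Lemma adjn_idx (G : graph) (s : seq 'I_(gn G)) u v :
  (forall x, x \in s) -> adjn s (index u s) (index v s) = gadj u v.
Proof.
move=> hs; apply/idP/idP.
  move=> /existsP [u' /existsP [v' /andP [/andP [/eqP e1 /eqP e2] h]]].
  have eu : u' = u by rewrite -(nth_index u (hs u')) e1 nth_index.
  have ev : v' = v by rewrite -(nth_index v (hs v')) e2 nth_index.
  by rewrite -eu -ev.
move=> h; apply/existsP; exists u; apply/existsP; exists v; by rewrite !eqxx h.
Qed.

Lemma index_pos (G : graph) (S : {set 'I_(gn G)}) u :
  (index u (sq S) < #|S|) = (u \in S).
Proof.
rewrite /sq index_cat mem_enum; case: (boolP (u \in S)) => h.
  by rewrite cardE index_mem mem_enum.
by rewrite cardE ltnNge leq_addr.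
Qed.

Lemma exists_at (G : graph) (S : {set 'I_(gn G)}) i :
  i < gn G -> exists u, index u (sq S) = i.
Proof.
move=> hi; exists (nth (Ordinal hi) (sq S) i).
by apply: index_uniq; rewrite ?sq_size // sq_uniq.
Qed.

Lemma sq_index_lt (G : graph) (S : {set 'I_(gn G)}) u : index u (sq S) < gn G.
Proof. by have := sq_mem S u; rewrite -index_mem sq_size. Qed.

Definition red (b i j : nat) : nat * nat :=
  if i < b then (if j < b then (i, j) else (i, b))
  else if j < b then (b, j) else if i == j then (b, b) else (b, b.+1).

Lemma red_lt b i j : (red b i j).1 < b.+2 /\ (red b i j).2 < b.+2.
Proof.
rewrite /red; case: (ltnP i b); case: (ltnP j b); case: (i == j); move=> * /=; lia.
Qed.

Lemma adjn_red (G : graph) (S : {set 'I_(gn G)}) i j :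
  crown (~: S) -> i < gn G -> j < gn G ->
  adjn (sq S) i j = adjn (sq S) (red #|S| i j).1 (red #|S| i j).2.
Proof.
move=> cS hi hj.
have [u eu] := exists_at S hi.
have [v ev] := exists_at S hj.
subst i j.
have hs := @sq_mem G S.
have hpos := @index_pos G S.
rewrite /red; case: (ltnP (index u (sq S)) #|S|) => hu;
  case: (ltnP (index v (sq S)) #|S|) => hv /=.
- by [].
- have [x1 ex1] := exists_at S (leq_ltn_trans hv hj).
  rewrite -ex1 !adjn_idx //.
  have uS : u \in S by rewrite -hpos.
  have vS : v \in ~: S by rewrite in_setC -hpos -leqNgt.
  have xS : x1 \in ~: S by rewrite in_setC -hpos ex1 ltnn.
  apply: (crown_pair cS vS xS).
    by apply: contraTneq vS => ->; rewrite in_setC uS.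
  by apply: contraTneq xS => ->; rewrite in_setC uS.
- have [x1 ex1] := exists_at S (leq_ltn_trans hu hi).
  rewrite -ex1 !adjn_idx // gsym (gsym x1).
  have vS : v \in S by rewrite -hpos.
  have uS : u \in ~: S by rewrite in_setC -hpos -leqNgt.
  have xS : x1 \in ~: S by rewrite in_setC -hpos ex1 ltnn.
  apply: (crown_pair cS uS xS).
    by apply: contraTneq uS => ->; rewrite in_setC vS.
  by apply: contraTneq xS => ->; rewrite in_setC vS.
- have [x1 ex1] := exists_at S (leq_ltn_trans hu hi).
  have uS : u \in ~: S by rewrite in_setC -hpos -leqNgt.
  have vS : v \in ~: S by rewrite in_setC -hpos -leqNgt.
  have xS : x1 \in ~: S by rewrite in_setC -hpos ex1 ltnn.
  case: (eqVneq (index u (sq S)) (index v (sq S))) => euv.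
    have e : u = v by rewrite -(nth_index u (hs u)) euv nth_index.
    subst v; rewrite -ex1 !adjn_idx // !girr //.
  have hb : #|S|.+1 < gn G.
    move: euv hu hv hi hj; move: (index u _) (index v _) => a c.
    move=> /eqP; lia.
  have [x2 ex2] := exists_at S hb.
  have x2S : x2 \in ~: S by rewrite in_setC -hpos ex2 ltnNge leqnSn.
  rewrite /= -ex2 -ex1 !adjn_idx //.
  have nuv : u != v by apply: contraNneq euv => ->.
  have nx : x1 != x2 by apply/eqP => e; move: ex2; rewrite -e ex1; lia.
  exact: (crown_const cS uS vS xS x2S nuv nx).
Qed.

Definition tau k (G : graph) (S : {set 'I_(gn G)}) :
  'I_k.+2 * {ffun 'I_k.+2 * 'I_k.+2 -> bool} :=
  (inord #|S|, [ffun p : 'I_k.+2 * 'I_k.+2 => adjn (sq S) p.1 p.2]).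

Lemma embed k (G1 G2 : graph) (S1 : {set 'I_(gn G1)}) (S2 : {set 'I_(gn G2)}) :
  crown (~: S1) -> crown (~: S2) -> #|S1| <= k -> #|S2| <= k ->
  tau k S1 = tau k S2 -> gn G1 <= gn G2 -> induced_in G1 G2.
Proof.
move=> c1 c2 k1 k2 [e1 e2] le.
have eS : #|S1| = #|S2|.
  have h1 : #|S1| < k.+2 by rewrite ltnS; apply: leq_trans k1 (leqnSn k).
  have h2 : #|S2| < k.+2 by rewrite ltnS; apply: leq_trans k2 (leqnSn k).
  by have := congr1 val e1; rewrite /= !inordK.
have eA i j : i < k.+2 -> j < k.+2 -> adjn (sq S1) i j = adjn (sq S2) i j.
  move=> hi hj; have := congr1 (fun f : {ffun 'I_k.+2 * 'I_k.+2 -> bool} => f (inord i, inord j)) e2.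
  by rewrite /= !ffunE /= !inordK.
have eB i j : i < gn G1 -> j < gn G1 -> adjn (sq S1) i j = adjn (sq S2) i j.
  move=> hi hj.
  rewrite (adjn_red c1) // (adjn_red c2) ?(leq_trans hi le) ?(leq_trans hj le) //.
  rewrite eS; have [r1 r2] := red_lt #|S2| i j.
  apply: eA; lia.
pose f (u : 'I_(gn G1)) := nth (widen_ord le u) (sq S2) (index u (sq S1)).
have hf u : index (f u) (sq S2) = index u (sq S1).
  apply: index_uniq; last exact: sq_uniq.
  rewrite sq_size; exact: (leq_trans (sq_index_lt S1 u) le).
exists f; split.
  move=> u v e; have := congr1 (index^~ (sq S2)) e; rewrite !hf => e'.
  by rewrite -(nth_index u (sq_mem S1 u)) e' nth_index // sq_mem.
move=> u v.
rewrite -(adjn_idx u v (@sq_mem G1 S1)) -(adjn_idx (f u) (f v) (@sq_mem G2 S2)).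
rewrite !hf; apply: eB; exact: sq_index_lt.
Qed.

Lemma fin_bound (T : finType) (Q : T -> nat -> Prop) :
  (forall t N N', N <= N' -> Q t N -> Q t N') -> (forall t, exists N, Q t N) ->
  exists N, forall t, Q t N.
Proof.
move=> mono ex.
suff [N hN] : exists N, forall t, t \in enum T -> Q t N.
  by exists N => t; apply: hN; rewrite mem_enum.
elim: (enum T) => [|t s [N hN]]; first by exists 0.
have [M hM] := ex t.
exists (maxn N M) => t'; rewrite in_cons => /orP [/eqP ->|ht].
  by apply: mono hM; rewrite leq_maxr.
by apply: mono (hN _ ht); rewrite leq_maxl.
Qed.

Lemma min_bound (F : gfamily) k :
  exists N, forall M (S : {set 'I_(gn M)}),
    minnm F M -> crown (~: S) -> #|S| <= k -> gn M <= N.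
Proof.
pose Q (t : 'I_k.+2 * {ffun 'I_k.+2 * 'I_k.+2 -> bool}) N :=
  forall M (S : {set 'I_(gn M)}), minnm F M -> crown (~: S) -> #|S| <= k ->
    tau k S = t -> gn M <= N.
have [N hN] : exists N, forall t, Q t N.
  apply: fin_bound.
    move=> t N N' le h M S m c b e; exact: leq_trans (h M S m c b e) le.
  move=> t.
  case: (classic (exists M (S : {set 'I_(gn M)}),
           minnm F M /\ crown (~: S) /\ #|S| <= k /\ tau k S = t)).
    move=> [M0 [S0 [m0 [c0 [b0 e0]]]]]; exists (gn M0) => M S m c b e.
    rewrite leqNgt; apply/negP => lt.
    have emb := embed c0 c b0 b (etrans e0 (esym e)) (ltnW lt).
    case: m0 => nF _; apply: nF; case: m => _ h; exact: h _ emb lt.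
  move=> nex; exists 0 => M S m c b e; exfalso; apply: nex; by exists M, S.
by exists N => M S m c b; exact: hN _ M S m c b erefl.
Qed.

Definition bsym n (c : {ffun 'I_n * 'I_n -> bool}) : rel 'I_n :=
  fun i j => (i != j) && c (i, j) && c (j, i).
Lemma bsym_sym n c : symmetric (@bsym n c).
Proof.
move=> i j; rewrite /bsym eq_sym.
by case: (c (i, j)); case: (c (j, i)); rewrite ?andbT ?andbF.
Qed.
Lemma bsym_irr n c : irreflexive (@bsym n c).
Proof. by move=> i; rewrite /bsym eqxx. Qed.
Definition build n c : graph := @Graph n (@bsym n c) (@bsym_sym n c) (@bsym_irr n c).
Definition code (G : graph) : {ffun 'I_(gn G) * 'I_(gn G) -> bool} :=
  [ffun p => gadj p.1 p.2].

Lemma build_code G : induced_in G (build (code G)) /\ induced_in (build (code G)) G.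
Proof.
have e : forall i j, gadj i j = bsym (code G) i j.
  move=> i j; rewrite /bsym /code !ffunE /=.
  case: (eqVneq i j) => [->|ne]; first by rewrite girr.
  by rewrite /= (gsym j i) andbb.
split.
  exists (fun i => i); split; first exact: inj_id.
  exact: e.
exists (fun i => i); split; first exact: inj_id.
move=> i j; exact: (esym (e i j)).
Qed.

Definition glist N : list graph :=
  List.flat_map (fun n => List.map (@build n) (enum {ffun 'I_n * 'I_n -> bool}))
    (iota 0 N.+1).

Lemma In_mem (T : eqType) (x : T) s : x \in s -> List.In x s.
Proof.
elim: s => //= y s IH; rewrite in_cons => /orP [/eqP ->|h]; [left|right; exact: IH].
by [].
Qed.

Lemma glist_in N G : gn G <= N -> List.In (build (code G)) (glist N).
Proof.
move=> h; apply/List.in_flat_map; exists (gn G); split.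
  by apply: In_mem; rewrite mem_iota; lia.
by apply: List.in_map; apply: In_mem; rewrite mem_enum.
Qed.

Lemma filterP (A : Type) (P : A -> Prop) (l : list A) :
  exists l', forall x, List.In x l' <-> List.In x l /\ P x.
Proof.
elim: l => [|a l [l' h]]; first by exists nil => x; split => // [[]].
case: (classic (P a)) => pa.
  exists (a :: l') => x /=; split.
    move=> [e|/h [hx px]]; last by split; [right|].
    by subst x; split; [left|].
  move=> [[e|hx] px]; first by left.
  by right; apply/h.
exists l' => x /=; split.
  by move=> /h [hx px]; split; [right|].
move=> [[e|hx] px]; first by subst x.
by apply/h.
Qed.

Theorem corollary4p2 (F : gfamily) :
  hereditary F -> star_like F -> finitely_generated F.
Proof.
move=> [_ hF] [s [n0 hs]].
have [N hN] := min_bound F (s + s + 2).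
pose N' := maxn N (n0 + 2).
have [Hs hHs] := filterP (fun H => ~ F H) (glist N').
exists Hs => G; split.
  move=> FG H /hHs [_ nH] HG; apply: nH; exact: hF G H HG FG.
move=> hG; apply: NNPP => nG.
have [M [mM MG]] := exists_minimal nG.
have bM : gn M <= N'.
  case: (leqP (n0 + 2) (gn M)) => h.
    have [S [cS bS]] := core_exists hs mM h.
    have := hN M S mM cS bS; rewrite /N'; lia.
  rewrite /N'; lia.
have [e1 e2] := build_code M.
apply: (hG (build (code M))).
  apply/hHs; split; first exact: glist_in.
  move=> FB; apply: mM.1; exact: hF _ _ e1 FB.
exact: induced_trans e2 MG.
Qed.
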